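(* For each $k\in\mathbb N$ let $m_k\in\mathbb N$ with $\lim_{k\to\infty}m_k/k=0$. (a) For every $a>0$ there exist $\epsilon(a)>0$ and $k_0,m_0\in\mathbb N$ such that for all $k\ge k_0$ and all integers $m\in[m_0,m_k]$, $$I\Bigl(j+1,k-j+1;\frac{m-a\sqrt m}{k}\Bigr)\ge\epsilon(a),\qquad j=0,\dots,m-1.$$ (b) For every $\epsilon>0$ there exist $a>0$, $k_0\in\mathbb N$ and $m_0=m_0(a)$ such that for all $k\ge k_0$ and all integers $m\in[m_0,m_k]$, $$I\Bigl(j+1,k-j+1;\frac{m-a\sqrt m}{k}\Bigr)\le\epsilon\,I\Bigl(j+1,k-j+1;\frac mk\Bigr),\qquad j=m,\dots,k.$$
   Context: For $a,b>0$ and $x\in(0,1)$, $I(a,b;x)=\frac{1}{\beta(a,b)}\int_0^x t^{a-1}(1-t)^{b-1}dt$ is the normalized incomplete beta function, where $\beta(a,b)=\int_0^1t^{a-1}(1-t)^{b-1}dt=\frac{\Gamma(a)\Gamma(b)}{\Gamma(a+b)}$. *)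

(* Defs.v *)
From Stdlib Require Import Reals.
From Coquelicot Require Import Coquelicot.
Open Scope R_scope.

Definition beta_integrand (a b : nat) (t : R) : R :=
  t ^ (a - 1) * (1 - t) ^ (b - 1).

Definition beta_fn (a b : nat) : R := RInt (beta_integrand a b) 0 1.

Definition incbeta (a b : nat) (x : R) : R :=
  RInt (beta_integrand a b) 0 x / beta_fn a b.

(* Main.v *)
Require Import Defs.
From Stdlib Require Import Reals Lra Lia Psatz FunctionalExtensionality.
From Coquelicot Require Import Coquelicot.
Open Scope R_scope.

Definition G (j d : nat) (t : R) : R := t ^ j * (1 - t) ^ d.
Definition dG (j d : nat) (t : R) : R :=
  INR j * t ^ (pred j) * (1 - t) ^ d - t ^ j * (INR d * (1 - t) ^ (pred d)).

Lemma G_deriv j d (t:R) : is_derive (G j d) t (dG j d t).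
Proof.
  unfold G, dG. auto_derive; auto. change (R_AbsRing) with R in *. unfold Rminus. ring.
Qed.

Lemma dG_cont j d (t:R) : continuous (dG j d) t.
Proof. apply (ex_derive_continuous (dG j d)). unfold dG. auto_derive. auto. Qed.
Lemma G_cont j d (t:R) : continuous (G j d) t.
Proof. apply (ex_derive_continuous (G j d)). eexists. apply G_deriv. Qed.

Lemma ex_G j d p q : ex_RInt (G j d) p q.
Proof. apply (ex_RInt_continuous (V:=R_CompleteNormedModule)). intros; apply G_cont. Qed.
Lemma ex_dG j d p q : ex_RInt (dG j d) p q.
Proof. apply (ex_RInt_continuous (V:=R_CompleteNormedModule)). intros; apply dG_cont. Qed.

Lemma FTC j d p q : RInt (dG j d) p q = G j d q - G j d p.
Proof.
  apply is_RInt_unique. apply (is_RInt_derive (G j d)).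
  - intros; apply G_deriv.
  - intros; apply dG_cont.
Qed.

Lemma dG_ident j d t : t * (1 - t) * dG j d t = (INR j * (1 - t) - INR d * t) * G j d t.
Proof.
  unfold dG, G. destruct j as [|j]; destruct d as [|d]; simpl pred; simpl; ring.
Qed.

Lemma G_ge0 j d t : 0 <= t <= 1 -> 0 <= G j d t.
Proof. intros; unfold G; apply Rmult_le_pos; apply pow_le; lra. Qed.
Lemma G_gt0 j d t : 0 < t < 1 -> 0 < G j d t.
Proof. intros; unfold G; apply Rmult_lt_0_compat; apply pow_lt; lra. Qed.

Lemma exp_pow_n z n : exp z ^ n = exp (INR n * z).
Proof.
  induction n. simpl. rewrite Rmult_0_l, exp_0; auto.
  rewrite S_INR, <- tech_pow_Rmult, IHn, <- exp_plus. f_equal; ring.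
Qed.

Lemma RInt_cst a b c : RInt (fun _ => c) a b = (b - a) * c.
Proof. rewrite RInt_const. reflexivity. Qed.
Lemma RInt_scl f a b l : ex_RInt f a b -> RInt (fun x => l * f x) a b = l * RInt f a b.
Proof. intros H. apply (RInt_scal f a b l H). Qed.
Lemma Chasles f a b c : ex_RInt f a b -> ex_RInt f b c -> RInt f a b + RInt f b c = RInt f a c.
Proof. intros. apply (RInt_Chasles f a b c); auto. Qed.

Lemma dG_lower j d t c : 0 < t < 1 -> c * (t * (1 - t)) <= INR j * (1 - t) - INR d * t ->
  c * G j d t <= dG j d t.
Proof.
  intros Ht Hc. assert (Hp : 0 < t * (1 - t)) by (apply Rmult_lt_0_compat; lra).
  apply (Rmult_le_reg_l (t * (1 - t))); auto. rewrite dG_ident.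
  pose proof (G_ge0 j d t ltac:(lra)).
  replace (t * (1 - t) * (c * G j d t)) with ((c * (t * (1 - t))) * G j d t) by ring.
  apply Rmult_le_compat_r; auto.
Qed.

Lemma dG_upper j d t c : 0 < t < 1 -> INR j * (1 - t) - INR d * t <= c * (t * (1 - t)) ->
  dG j d t <= c * G j d t.
Proof.
  intros Ht Hc. assert (Hp : 0 < t * (1 - t)) by (apply Rmult_lt_0_compat; lra).
  apply (Rmult_le_reg_l (t * (1 - t))); auto. rewrite dG_ident.
  pose proof (G_ge0 j d t ltac:(lra)).
  replace (t * (1 - t) * (c * G j d t)) with ((c * (t * (1 - t))) * G j d t) by ring.
  apply Rmult_le_compat_r; auto.
Qed.

Lemma RInt_ge0_G j d p q : 0 <= p -> p <= q -> q <= 1 -> 0 <= RInt (G j d) p q.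
Proof.
  intros. apply RInt_ge_0; auto. apply ex_G. intros; apply G_ge0; lra.
Qed.

Lemma partb (j d : nat) (K m s a : R) :
  K = INR j + INR d -> 0 < s -> s * s = m -> 0 < a -> a * s <= m -> m <= INR j -> m <= K ->
  RInt (G j d) 0 ((m - a * s) / K) <= / (a * a) * RInt (G j d) 0 (m / K).
Proof.
  intros HK Hs Hm Ha Has HmJ HmK.
  assert (HK0 : 0 < K) by nra.
  set (x := (m - a * s) / K). set (y := m / K).
  assert (Kx : K * x = m - a * s) by (unfold x; field; lra).
  assert (Ky : K * y = m) by (unfold y; field; lra).
  assert (Hx0 : 0 <= x) by (unfold x; apply Rdiv_le_0_compat; lra).
  assert (Hxy : x <= y) by nra.
  assert (Hy1 : y <= 1) by nra.
  set (lam := a * K / s).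
  assert (Hlam : 0 < lam) by (unfold lam; apply Rdiv_lt_0_compat; nra).
  assert (lamx : lam * x = a * s - a * a) by (unfold lam, x; rewrite <- Hm; field; lra).
  assert (S1 : RInt (G j d) 0 x <= / lam * G j d x).
  { apply Rle_trans with (RInt (fun t => / lam * dG j d t) 0 x).
    - apply RInt_le; auto. apply ex_G.
      apply (ex_RInt_scal (V:=R_NormedModule)). apply ex_dG.
      intros t Ht. apply (Rmult_le_reg_l lam); auto. rewrite <- Rmult_assoc, Rinv_r, Rmult_1_l by lra.
      apply dG_lower. lra.
      assert (lam * (t * (1 - t)) <= lam * x).
      { apply Rmult_le_compat_l; [lra|]. nra. }
      nra.
    - rewrite RInt_scl by apply ex_dG. rewrite FTC.
      assert (0 <= G j d 0) by (apply G_ge0; lra).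
      assert (0 < / lam) by (apply Rinv_0_lt_compat; auto). nra. }
  assert (S2 : (y - x) * G j d x <= RInt (G j d) x y).
  { rewrite <- RInt_cst. apply RInt_le; auto. apply ex_RInt_const. apply ex_G.
    intros t Ht. assert (0 <= RInt (dG j d) x t).
    { apply RInt_ge_0. lra. apply ex_dG. intros u Hu.
      replace 0 with (0 * G j d u) by ring. apply dG_lower. lra.
      assert (K * u <= m) by nra. nra. }
    rewrite FTC in H. lra. }
  assert (S3 : / lam = (y - x) * / (a * a)).
  { unfold lam. assert (y - x = a * s / K) by (unfold x, y; field; lra). rewrite H.
    field. repeat split; lra. }
  assert (C : RInt (G j d) 0 x + RInt (G j d) x y = RInt (G j d) 0 y) by (apply Chasles; apply ex_G).
  assert (P0 : 0 <= RInt (G j d) 0 x) by (apply RInt_ge0_G; lra).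
  fold y. rewrite <- C. rewrite S3 in S1.
  assert (0 < / (a * a)) by (apply Rinv_0_lt_compat; nra).
  assert (0 <= G j d x) by (apply G_ge0; lra).
  nra.
Qed.

Lemma parta (j d : nat) (K m s a : R) :
  K = INR j + INR d -> 2 <= s -> 2 * (a + 1) <= s -> s * s = m -> 0 < a ->
  INR j + 1 <= m -> 6 * m <= K ->
  0 < RInt (G j d) 0 ((m - a * s) / K) /\
  RInt (G j d) 0 1 <= (1 + (a + 3) * exp (4 * (a + 1) * (a + 3))) * RInt (G j d) 0 ((m - a * s) / K).
Proof.
  intros HK Hs Hs2 Hm Ha HJ HK6. subst m.
  assert (HK0 : 0 < K) by nra.
  set (E := exp (4 * (a + 1) * (a + 3))).
  assert (HE : 0 < E) by apply exp_pos.
  set (x := (s * s - a * s) / K). set (w := (s * s - (a + 1) * s) / K).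
  set (s0 := (s * s + 2 * s) / K). set (h := s / K).
  assert (Kx : K * x = s * s - a * s) by (unfold x; field; lra).
  assert (Kw : K * w = s * s - (a + 1) * s) by (unfold w; field; lra).
  assert (Ks0 : K * s0 = s * s + 2 * s) by (unfold s0; field; lra).
  assert (Kh : K * h = s) by (unfold h; field; lra).
  assert (Hw0 : 2 * (K * w) >= s * s) by nra.
  assert (Hw : 0 < w) by nra.
  assert (Hwx : w < x) by nra.
  assert (Hxs0 : x < s0) by nra.
  assert (Hs01 : 2 * s0 <= 1) by nra.
  assert (Hh : 0 < h) by nra.
  assert (RB : forall v u, w <= v <= x -> v <= u <= s0 -> G j d u <= E * G j d v).
  { intros v u Hv Hu.
    set (z := (u - v) / v). set (z' := - (u - v) / (1 - v)).
    assert (Hu1 : u = v * (1 + z)) by (unfold z; field; lra).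
    assert (Hu2 : 1 - u = (1 - v) * (1 + z')) by (unfold z'; field; lra).
    assert (Gu : G j d u = G j d v * ((1 + z) ^ j * (1 + z') ^ d)).
    { unfold G. rewrite Hu2. pattern u at 1. rewrite Hu1. rewrite !Rpow_mult_distr. ring. }
    assert (z0 : 0 <= z) by (unfold z; apply Rdiv_le_0_compat; lra).
    assert (z'0 : 0 <= 1 + z') by (unfold z'; apply (Rmult_le_reg_l (1 - v)); [lra|];
       field_simplify; lra).
    assert (P1 : (1 + z) ^ j <= exp (INR j * z)).
    { rewrite <- exp_pow_n. apply pow_incr. split. lra. apply exp_ineq1_le. }
    assert (P2 : (1 + z') ^ d <= exp (INR d * z')).
    { rewrite <- exp_pow_n. apply pow_incr. split. lra. apply exp_ineq1_le. }
    assert (Hv1 : 0 < v * (1 - v)) by (apply Rmult_lt_0_compat; lra).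
    assert (Q : v * (1 - v) * (INR j * z + INR d * z') = (u - v) * (INR j - K * v)).
    { unfold z, z'. rewrite HK. field. lra. }
    assert (Q2 : INR j * z + INR d * z' <= 4 * (a + 1) * (a + 3)).
    { apply (Rmult_le_reg_l (K * (v * (1 - v)))). nra.
      assert (Q' : K * (v * (1 - v)) * (INR j * z + INR d * z') = K * ((u - v) * (INR j - K * v)))
        by (rewrite <- Q; ring). rewrite Q'.
      assert (A1 : K * (u - v) <= (a + 3) * s) by nra.
      assert (A2 : INR j - K * v <= (a + 1) * s) by nra.
      assert (A3 : 2 * (K * v) >= s * s) by nra.
      assert (A4 : 2 * (1 - v) >= 1) by lra.
      assert (A5 : K * (v * (1 - v)) * 4 >= s * s).
      { replace (K * (v * (1 - v)) * 4) with ((2 * (K * v)) * (2 * (1 - v))) by ring.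
        apply Rle_ge. replace (s * s) with ((s * s) * 1) by ring.
        apply Rmult_le_compat; [nra|lra|lra|lra]. }
      assert (A6 : 0 < (a + 1) * (a + 3)) by (apply Rmult_lt_0_compat; lra).
      assert (A7 : K * (v * (1 - v)) * (4 * (a + 1) * (a + 3)) >= s * s * ((a + 1) * (a + 3))).
      { replace (K * (v * (1 - v)) * (4 * (a + 1) * (a + 3))) with
          ((K * (v * (1 - v)) * 4) * ((a + 1) * (a + 3))) by ring.
        apply Rle_ge, Rmult_le_compat_r; lra. }
      replace (K * ((u - v) * (INR j - K * v))) with ((K * (u - v)) * (INR j - K * v)) by ring.
      assert (A8 : 0 <= K * (u - v)) by (apply Rmult_le_pos; lra).
      destruct (Rle_or_lt (INR j - K * v) 0).
      - assert ((K * (u - v)) * (INR j - K * v) <= 0).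
        { replace 0 with ((K * (u - v)) * 0) by ring. apply Rmult_le_compat_l; auto. }
        assert (0 <= s * s * ((a + 1) * (a + 3))) by (apply Rmult_le_pos; nra).
        lra.
      - assert (K * (u - v) * (INR j - K * v) <= (a + 3) * s * ((a + 1) * s)).
        { apply Rmult_le_compat; lra. }
        assert ((a + 3) * s * ((a + 1) * s) = s * s * ((a + 1) * (a + 3))) by ring.
        lra. }
    rewrite Gu.
    assert (0 <= G j d v) by (apply G_ge0; lra).
    assert (0 <= (1 + z) ^ j) by (apply pow_le; lra).
    assert ((1 + z) ^ j * (1 + z') ^ d <= E).
    { apply Rle_trans with (exp (INR j * z) * exp (INR d * z')).
      apply Rmult_le_compat; auto. apply pow_le; lra.
      rewrite <- exp_plus. unfold E. destruct Q2 as [Q2|Q2]. left; apply exp_increasing; auto.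
      rewrite Q2; lra. }
    nra. }
  set (Iwx := (RInt (G j d) w x : R)).
  assert (S3 : forall u, x <= u <= s0 -> G j d u <= E / h * Iwx).
  { intros u Hu.
    assert (h * (G j d u / E) <= Iwx).
    { replace h with (x - w) by (apply (Rmult_eq_reg_l K); [|lra]; nra).
      rewrite <- RInt_cst. apply RInt_le. lra. apply ex_RInt_const. apply ex_G.
      intros v Hv. apply (Rmult_le_reg_l E); auto. replace (E * (G j d u / E)) with (G j d u) by (field; lra).
      apply RB; lra. }
    replace (E / h * Iwx) with (E / h * Iwx) by reflexivity.
    apply (Rmult_le_reg_l (h / E)). apply Rdiv_lt_0_compat; auto.
    replace (h / E * (E / h * Iwx)) with Iwx by (field; lra).
    replace (h / E * G j d u) with (h * (G j d u / E)) by (field; lra). auto. }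
  assert (S4 : RInt (G j d) x s0 <= (a + 2) * E * Iwx).
  { apply Rle_trans with (RInt (fun _ => E / h * Iwx) x s0).
    apply RInt_le. lra. apply ex_G. apply ex_RInt_const.
    intros u Hu. apply S3; lra.
    rewrite RInt_cst. replace (s0 - x) with ((a + 2) * h) by (apply (Rmult_eq_reg_l K); [|lra]; nra).
    field_simplify; lra. }
  assert (S2 : RInt (G j d) s0 1 <= h * G j d s0).
  { apply Rle_trans with (RInt (fun t => - h * dG j d t) s0 1).
    - apply RInt_le. lra. apply ex_G. apply (ex_RInt_scal (V:=R_NormedModule)). apply ex_dG.
      intros t Ht.
      assert (dG j d t <= - / h * G j d t).
      { apply dG_upper. lra. apply (Rmult_le_reg_l s). lra.
        replace (s * (- / h * (t * (1 - t)))) with (- (K * t * (1 - t))) by (unfold h; field; lra).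
        assert (K * t >= s * s + 2 * s) by nra. nra. }
      apply (Rmult_le_reg_l (/ h)). apply Rinv_0_lt_compat; auto.
      replace (/ h * (- h * dG j d t)) with (- dG j d t) by (field; lra). lra.
    - rewrite RInt_scl by apply ex_dG. rewrite FTC.
      assert (0 <= G j d 1) by (apply G_ge0; lra). nra. }
  assert (S5 : h * G j d s0 <= E * Iwx).
  { pose proof (S3 s0 ltac:(lra)). apply (Rmult_le_compat_l h) in H; [|lra].
    replace (h * (E / h * Iwx)) with (E * Iwx) in H by (field; lra). auto. }
  assert (Pos : 0 < Iwx).
  { pose proof (S3 x ltac:(lra)). assert (0 < G j d x) by (apply G_gt0; lra).
    assert (0 < E / h * Iwx) by lra. 
    assert (0 < E / h) by (apply Rdiv_lt_0_compat; auto). nra. }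
  assert (C1 : RInt (G j d) 0 w + Iwx = RInt (G j d) 0 x) by (apply Chasles; apply ex_G).
  assert (C2 : RInt (G j d) 0 x + RInt (G j d) x s0 = RInt (G j d) 0 s0) by (apply Chasles; apply ex_G).
  assert (C3 : RInt (G j d) 0 s0 + RInt (G j d) s0 1 = RInt (G j d) 0 1) by (apply Chasles; apply ex_G).
  assert (P0 : 0 <= RInt (G j d) 0 w) by (apply RInt_ge0_G; lra).
  fold x. split. lra.
  rewrite <- C3, <- C2.
  assert (T : (a + 3) * E * Iwx <= (a + 3) * E * RInt (G j d) 0 x).
  { apply Rmult_le_compat_l. apply Rmult_le_pos; lra. lra. }
  lra.
Qed.

Lemma incbeta_G j k X : incbeta (j + 1) (k - j + 1) X = RInt (G j (k - j)) 0 X / RInt (G j (k - j)) 0 1.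
Proof.
  unfold incbeta, beta_fn.
  assert (H : beta_integrand (j + 1) (k - j + 1) = G j (k - j)).
  { apply functional_extensionality; intro t. unfold beta_integrand, G.
    replace (j + 1 - 1)%nat with j by lia. replace (k - j + 1 - 1)%nat with (k - j)%nat by lia. auto. }
  rewrite H. auto.
Qed.

Lemma get_nat (b : R) : exists n : nat, forall m : nat, (n <= m)%nat -> b <= INR m.
Proof.
  destruct (INR_unbounded b) as [n Hn]. exists n. intros m Hm.
  apply le_INR in Hm. lra.
Qed.

Lemma sqrt_ge (m b : R) : 0 <= b -> b * b <= m -> b <= sqrt m.
Proof.
  intros Hb Hm. rewrite <- (sqrt_square b) by auto. apply sqrt_le_1_alt. auto.
Qed.

Lemma get_k0 (mk : nat -> nat) (hmk : is_lim_seq (fun k => INR (mk k) / INR k) 0) (c : R) :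
  0 < c -> exists k0 : nat, forall k m : nat, (k0 <= k)%nat -> (m <= mk k)%nat ->
    0 < INR k /\ INR m < c * INR k.
Proof.
  intros Hc. apply is_lim_seq_Reals in hmk. destruct (hmk c Hc) as [N HN].
  exists (max N 1). intros k m Hk Hm.
  assert (Hk1 : (1 <= k)%nat) by lia. apply le_INR in Hk1. simpl in Hk1.
  split. lra.
  specialize (HN k ltac:(lia)). unfold R_dist in HN. rewrite Rminus_0_r in HN.
  apply Rabs_def2 in HN. destruct HN as [HN _].
  apply le_INR in Hm.
  assert (INR (mk k) < c * INR k).
  { apply (Rmult_lt_compat_r (INR k)) in HN; [|lra].
    replace (INR (mk k) / INR k * INR k) with (INR (mk k)) in HN by (field; lra). lra. }
  lra.
Qed.

Theorem lemma3p2 (mk : nat -> nat)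
  (hmk : is_lim_seq (fun k => INR (mk k) / INR k) 0) :
  (forall a : R, 0 < a ->
     exists eps : R, 0 < eps /\
     exists k0 m0 : nat,
       forall k m : nat, (k0 <= k)%nat -> (m0 <= m)%nat -> (m <= mk k)%nat ->
       forall j : nat, (j < m)%nat ->
         incbeta (j + 1) (k - j + 1) ((INR m - a * sqrt (INR m)) / INR k) >= eps)
  /\
  (forall eps : R, 0 < eps ->
     exists a : R, 0 < a /\
     exists k0 m0 : nat,
       forall k m : nat, (k0 <= k)%nat -> (m0 <= m)%nat -> (m <= mk k)%nat ->
       forall j : nat, (m <= j <= k)%nat ->
         incbeta (j + 1) (k - j + 1) ((INR m - a * sqrt (INR m)) / INR k)
         <= eps * incbeta (j + 1) (k - j + 1) (INR m / INR k)).
Proof.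
  split.
  - intros a Ha.
    set (C := 1 + (a + 3) * exp (4 * (a + 1) * (a + 3))).
    assert (HC : 0 < C) by (unfold C; pose proof (exp_pos (4 * (a + 1) * (a + 3))); nra).
    exists (/ C). split. apply Rinv_0_lt_compat; auto.
    destruct (get_k0 mk hmk (/ 6) ltac:(lra)) as [k0 Hk0].
    set (b := 2 * (a + 1) + 2).
    destruct (get_nat (b * b)) as [m0 Hm0].
    exists k0, m0. intros k m Hk Hm Hmk j Hj.
    destruct (Hk0 k m Hk Hmk) as [HK0 HKm].
    pose proof (Hm0 m Hm) as Hbm.
    assert (Hs : b <= sqrt (INR m)) by (apply sqrt_ge; [unfold b; lra | exact Hbm]).
    assert (Hm0' : 0 <= INR m) by apply pos_INR.
    assert (Hss : sqrt (INR m) * sqrt (INR m) = INR m) by (apply sqrt_sqrt; auto).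
    assert (HJ : INR j + 1 <= INR m) by (rewrite <- S_INR; apply le_INR; lia).
    assert (Hjk : (j <= k)%nat) by (apply INR_le; lra).
    assert (HK : INR k = INR j + INR (k - j)) by (rewrite minus_INR by auto; ring).
    destruct (parta j (k - j) (INR k) (INR m) (sqrt (INR m)) a HK) as [P1 P2];
      try (unfold b in Hs; lra); auto.
    rewrite incbeta_G.
    set (I0 := (RInt (G j (k - j)) 0 ((INR m - a * sqrt (INR m)) / INR k) : R)) in *.
    set (B := (RInt (G j (k - j)) 0 1 : R)) in *.
    fold C in P2.
    assert (Hx0 : 0 <= (INR m - a * sqrt (INR m)) / INR k).
    { apply Rdiv_le_0_compat; [|lra]. unfold b in Hs. nra. }
    assert (Hx1 : (INR m - a * sqrt (INR m)) / INR k <= 1).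
    { apply (Rmult_le_reg_l (INR k)); auto. field_simplify; [|lra]. unfold b in Hs. nra. }
    assert (HB : 0 < B).
    { assert (Ch := Chasles (G j (k - j)) 0 ((INR m - a * sqrt (INR m)) / INR k) 1 (ex_G _ _ _ _) (ex_G _ _ _ _)).
      assert (0 <= RInt (G j (k - j)) ((INR m - a * sqrt (INR m)) / INR k) 1) by (apply RInt_ge0_G; lra).
      fold I0 B in Ch. lra. }
    apply Rle_ge. apply (Rmult_le_reg_l (C * B)). nra.
    replace (C * B * / C) with B by (field; lra).
    replace (C * B * (I0 / B)) with (C * I0) by (field; lra). lra.
  - intros eps Heps.
    set (a := / sqrt eps).
    assert (Hse : 0 < sqrt eps) by (apply sqrt_lt_R0; auto).
    assert (Ha : 0 < a) by (apply Rinv_0_lt_compat; auto).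
    assert (Haa : / (a * a) = eps).
    { unfold a. rewrite <- Rinv_mult. rewrite Rinv_inv. apply sqrt_sqrt; lra. }
    exists a. split; auto.
    destruct (get_k0 mk hmk 1 ltac:(lra)) as [k0 Hk0].
    destruct (get_nat ((a + 1) * (a + 1))) as [m0 Hm0].
    exists k0, m0. intros k m Hk Hm Hmk j Hj.
    destruct (Hk0 k m Hk Hmk) as [HK0 HKm].
    pose proof (Hm0 m Hm) as Hbm.
    assert (Hs : a + 1 <= sqrt (INR m)) by (apply sqrt_ge; [lra | exact Hbm]).
    assert (Hm0' : 0 <= INR m) by apply pos_INR.
    assert (Hss : sqrt (INR m) * sqrt (INR m) = INR m) by (apply sqrt_sqrt; auto).
    assert (HJ : INR m <= INR j) by (apply le_INR; lia).
    assert (HK : INR k = INR j + INR (k - j)) by (rewrite minus_INR by lia; ring).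
    pose proof (partb j (k - j) (INR k) (INR m) (sqrt (INR m)) a HK ltac:(lra) Hss Ha
      ltac:(nra) HJ ltac:(lra)) as P.
    rewrite Haa in P.
    rewrite !incbeta_G.
    set (B := (RInt (G j (k - j)) 0 1 : R)).
    assert (HB : 0 <= / B).
    { assert (0 <= B) by (apply RInt_ge0_G; lra).
      destruct (Req_dec B 0) as [E|E]. rewrite E, Rinv_0; lra.
      left; apply Rinv_0_lt_compat; lra. }
    unfold Rdiv. rewrite <- Rmult_assoc. apply Rmult_le_compat_r; auto.
Qed.
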